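(* Let $R$ be a $u$-ring, let $n$ be a positive integer and let $I$ be a proper ideal of $R$. Then the following conditions are equivalent: (a) $I$ is a strongly weakly $n$-absorbing ideal of $R$; (b) $I$ is a weakly $n$-absorbing ideal of $R$; (c) for every integer $t$ with $0\leq t\leq n$, all ideals $I_1,\dots,I_t$ of $R$ and all elements $x_1,\dots,x_{n-t}\in R$ such that $x_1\cdots x_{n-t}I_1\cdots I_t\not\subseteq I$, one has $$(I:_R x_1\cdots x_{n-t}I_1\cdots I_t)=\Big[\bigcup_{i=1}^{n-t}(I:_R x_1\cdots\widehat{x_i}\cdots x_{n-t}I_1\cdots I_t)\Big]\cup\Big[\bigcup_{j=1}^{t}(I:_R x_1\cdots x_{n-t}I_1\cdots\widehat{I_j}\cdots I_t)\Big]\cup(0:_R x_1\cdots x_{n-t}I_1\cdots I_t);$$ (d) for every integer $t$ with $0\leq t\leq n$, all ideals $I_1,\dots,I_t$ of $R$ and all elements $x_1,\dots,x_{n-t}\in R$ such that $x_1\cdots x_{n-t}I_1\cdots I_t\not\subseteq I$, either $(I:_R x_1\cdots x_{n-t}I_1\cdots I_t)=(I:_R x_1\cdots\widehat{x_i}\cdots x_{n-t}I_1\cdots I_t)$ for some $1\leq i\leq n-t$, or $(I:_R x_1\cdots x_{n-t}I_1\cdots I_t)=(I:_R x_1\cdots x_{n-t}I_1\cdots\widehat{I_j}\cdots I_t)$ for some $1\leq j\leq t$, or $(I:_R x_1\cdots x_{n-t}I_1\cdots I_t)=(0:_R x_1\cdots x_{n-t}I_1\cdots I_t)$.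
   Context: All rings are commutative with $1\neq 0$. A ring $R$ is a $u$-ring if whenever an ideal of $R$ is contained in a finite union of ideals of $R$, it is contained in one of those ideals. A proper ideal $I$ of $R$ is weakly $n$-absorbing if whenever $0\neq a_1\cdots a_{n+1}\in I$ with $a_1,\dots,a_{n+1}\in R$, there are $n$ of the $a_i$'s whose product is in $I$; it is strongly weakly $n$-absorbing if whenever $0\neq I_1\cdots I_{n+1}\subseteq I$ for ideals $I_1,\dots,I_{n+1}$ of $R$, there are $n$ of the $I_i$'s whose product is contained in $I$. For an ideal (or element) $K$, $(I:_R K)=\{r\in R: rK\subseteq I\}$; $x_1\cdots x_{n-t}I_1\cdots I_t$ denotes the ideal product (elements regarded as principal ideals); a hat $\widehat{\ }$ denotes omission of that factor; an empty product is $R$. *)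

(* Defs.v *)
(* Ideals of a commutative ring are represented as
   Prop-valued predicates R -> Prop satisfying the ideal axioms. *)
From mathcomp Require Import all_boot all_order all_algebra.
Set Implicit Arguments. Unset Strict Implicit. Unset Printing Implicit Defensive.
Import GRing.Theory.
Local Open Scope ring_scope.

Section Ideals.
Variable R : comNzRingType.

Definition subI (I J : R -> Prop) : Prop := forall x, I x -> J x.

Definition is_id (I : R -> Prop) : Prop :=
  [/\ I 0, (forall x y, I x -> I y -> I (x + y)) & (forall r x, I x -> I (r * x))].

Definition proper_id (I : R -> Prop) : Prop := is_id I /\ ~ I 1.

Definition fullI : R -> Prop := fun _ => True.
Definition zeroI : R -> Prop := fun x => x = 0.

Definition principal (x : R) : R -> Prop := fun z => exists r, z = r * x.

Definition iprod (I J : R -> Prop) : R -> Prop :=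
  fun z => forall K, is_id K -> (forall a b, I a -> J b -> K (a * b)) -> K z.

Definition iprodl (l : seq (R -> Prop)) : R -> Prop := foldr iprod fullI l.

Definition colon (I K : R -> Prop) : R -> Prop := fun r => forall z, K z -> I (r * z).

Definition u_ring : Prop :=
  forall (I : R -> Prop) (k : nat) (J : 'I_k -> R -> Prop),
    is_id I -> (forall i, is_id (J i)) ->
    subI I (fun x => exists i, J i x) -> exists i, subI I (J i).

Definition weakly_n_absorbing (n : nat) (I : R -> Prop) : Prop :=
  proper_id I /\
  forall a : 'I_n.+1 -> R,
    \prod_(i < n.+1) a i != 0 -> I (\prod_(i < n.+1) a i) ->
    exists j : 'I_n.+1, I (\prod_(i < n.+1 | i != j) a i).

Definition strongly_weakly_n_absorbing (n : nat) (I : R -> Prop) : Prop :=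
  proper_id I /\
  forall F : 'I_n.+1 -> R -> Prop, (forall i, is_id (F i)) ->
    (exists z, iprodl [seq F i | i <- enum 'I_n.+1] z /\ z <> 0) ->
    subI (iprodl [seq F i | i <- enum 'I_n.+1]) I ->
    exists j : 'I_n.+1, subI (iprodl [seq F i | i <- enum 'I_n.+1 & i != j]) I.

Definition mixprod (m t : nat) (x : 'I_m -> R) (F : 'I_t -> R -> Prop) : R -> Prop :=
  iprodl ([seq principal (x i) | i <- enum 'I_m] ++ [seq F j | j <- enum 'I_t]).

Definition mixprod_omx (m t : nat) (x : 'I_m -> R) (F : 'I_t -> R -> Prop) (i0 : 'I_m)
  : R -> Prop :=
  iprodl ([seq principal (x i) | i <- enum 'I_m & i != i0] ++ [seq F j | j <- enum 'I_t]).

Definition mixprod_omI (m t : nat) (x : 'I_m -> R) (F : 'I_t -> R -> Prop) (j0 : 'I_t)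
  : R -> Prop :=
  iprodl ([seq principal (x i) | i <- enum 'I_m] ++ [seq F j | j <- enum 'I_t & j != j0]).

Definition condC (n : nat) (I : R -> Prop) : Prop :=
  forall (t : nat), (t <= n)%N ->
  forall (F : 'I_t -> R -> Prop) (x : 'I_(n - t) -> R),
    (forall j, is_id (F j)) ->
    ~ subI (mixprod x F) I ->
    forall r, colon I (mixprod x F) r <->
      [\/ (exists i, colon I (mixprod_omx x F i) r),
          (exists j, colon I (mixprod_omI x F j) r)
        | colon zeroI (mixprod x F) r].

Definition condD (n : nat) (I : R -> Prop) : Prop :=
  forall (t : nat), (t <= n)%N ->
  forall (F : 'I_t -> R -> Prop) (x : 'I_(n - t) -> R),
    (forall j, is_id (F j)) ->
    ~ subI (mixprod x F) I ->
    [\/ (exists i, forall r, colon I (mixprod x F) r <-> colon I (mixprod_omx x F i) r),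
        (exists j, forall r, colon I (mixprod x F) r <-> colon I (mixprod_omI x F j) r)
      | (forall r, colon I (mixprod x F) r <-> colon zeroI (mixprod x F) r)].

End Ideals.

(* Main.v *)
Require Import Defs.
From mathcomp Require Import all_boot all_order all_algebra ring.
From Stdlib Require Import Classical.
Set Implicit Arguments. Unset Strict Implicit. Unset Printing Implicit Defensive.
Import GRing.Theory.
Local Open Scope ring_scope.

Section S.
Variable R : comNzRingType.

Definition Pall k (f : 'I_k -> R) := \prod_(i <- enum 'I_k) f i.
Definition Pom k (f : 'I_k -> R) (i0 : 'I_k) := \prod_(i <- [seq i <- enum 'I_k | i != i0]) f i.

Lemma Pall_ord k (f : 'I_k -> R) : Pall f = \prod_(i < k) f i.
Proof. by rewrite /Pall big_enum. Qed.

Lemma Pom_ord k (f : 'I_k -> R) i0 : Pom f i0 = \prod_(i < k | i != i0) f i.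
Proof. by rewrite /Pom big_filter big_enum_cond. Qed.

Lemma L_all k (f : 'I_k.+1 -> R) : Pall f = f ord0 * Pall (fun i => f (lift ord0 i)).
Proof. by rewrite /Pall enum_ordSl big_cons big_map. Qed.

Lemma L_om0 k (f : 'I_k.+1 -> R) : Pom f ord0 = Pall (fun i => f (lift ord0 i)).
Proof.
rewrite /Pom /Pall enum_ordSl /= filter_map big_map.
congr (\big[_/_]_(i <- _ | _) _); apply/all_filterP/allP => i _ /=.
by [].
Qed.

Lemma L_omS k (f : 'I_k.+1 -> R) j : Pom f (lift ord0 j) = f ord0 * Pom (fun i => f (lift ord0 i)) j.
Proof.
rewrite /Pom enum_ordSl /= big_cons filter_map big_map.
congr (_ * \prod_(i <- _) _); apply: eq_filter => i /=.
Qed.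

Fixpoint Gen (L : seq (R -> Prop)) (K : R -> Prop) : Prop :=
  match L with [::] => K 1 | A :: L' => forall a, A a -> Gen L' (fun z => K (a * z)) end.

Lemma Gen_mono L K K' : (forall z, K z -> K' z) -> Gen L K -> Gen L K'.
Proof.
elim: L K K' => [|A L IH] K K' H /=; first exact: H.
move=> HG a Aa; apply: (IH _ _ _ (HG a Aa)) => z; exact: H.
Qed.

Lemma Gen_ext L K K' : (forall z, K z <-> K' z) -> (Gen L K <-> Gen L K').
Proof. move=> H; split; apply: Gen_mono => z; apply H. Qed.

Lemma id_mul (K : R -> Prop) a : is_id K -> is_id (fun z => K (a * z)).
Proof.
case=> K0 KD KM; split; first by rewrite mulr0.
- by move=> x y Hx Hy; rewrite mulrDr; apply: KD.
- by move=> r x Hx; rewrite mulrCA; apply: KM.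
Qed.

Lemma sub_Gen L (K : R -> Prop) : is_id K -> (subI (iprodl L) K <-> Gen L K).
Proof.
elim: L K => [|A L IH] K idK /=.
  split; first by move=> H; apply: H.
  by move=> H z _; rewrite -[z]mulr1; case: idK => _ _; apply.
split.
- move=> H a Aa; apply/(IH _ (id_mul a idK)) => z Pz; apply: H.
  by move=> K' _ HK; apply: HK.
- move=> H z Hz; apply: Hz => // a b Aa Pb.
  by move/(IH _ (id_mul a idK)): (H a Aa); apply.
Qed.

Lemma Gen_cat L1 L2 K :
  Gen (L1 ++ L2) K <-> Gen L1 (fun z => Gen L2 (fun w => K (z * w))).
Proof.
elim: L1 K => [|A L1 IH] K /=.
  by apply: Gen_ext => z; rewrite mul1r.
split=> H a Aa.
- move/IH: (H a Aa); apply: Gen_mono => z; apply: Gen_mono => w.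
  by rewrite mulrA.
- apply/IH; move: (H a Aa); apply: Gen_mono => z; apply: Gen_mono => w.
  by rewrite mulrA.
Qed.

Lemma Gen_idx (T : eqType) (G : T -> R -> Prop) (s : seq T) K : uniq s ->
  (Gen (map G s) K <-> forall g : T -> R, (forall i, i \in s -> G i (g i)) ->
      K (\prod_(i <- s) g i)).
Proof.
elim: s K => [|i0 s IH] K /=.
  move=> _; split=> [H g _|H]; first by rewrite big_nil.
  by have := H (fun _ => 0); rewrite big_nil; apply.
case/andP=> ni0 us; split.
- move=> H g Hg; rewrite big_cons.
  move/(IH _ us): (H (g i0) (Hg _ (mem_head _ _))); apply => i Hi.
  by apply: Hg; rewrite inE Hi orbT.
- move=> H a Aa; apply/(IH _ us) => g Hg.
  pose g' i := if i == i0 then a else g i.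
  have := H g'; rewrite big_cons /g' eqxx.
  have -> : \prod_(i <- s) (if i == i0 then a else g i) = \prod_(i <- s) g i.
    apply: eq_big_seq => i Hi; case: eqP => // E; by rewrite -E Hi in ni0.
  apply => i; rewrite inE; case: eqP => [-> //|_ /= Hi]; exact: Hg.
Qed.

Lemma Gen_principal (T : Type) (x : T -> R) (s : seq T) K :
  (forall r w, K w -> K (r * w)) ->
  (Gen (map (fun i => principal (x i)) s) K <-> K (\prod_(i <- s) x i)).
Proof.
elim: s K => [|i0 s IH] K HK /=; first by rewrite big_nil.
have HK' a : forall r w, K (a * w) -> K (a * (r * w)).
  by move=> r w H; rewrite mulrCA; apply: HK.
rewrite big_cons; split.
- by move=> H; have /(IH _ (HK' _)) := H (x i0) (ex_intro _ 1 (esym (mul1r _))).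
- move=> H a [c ->]; apply/(IH _ (HK' _)); rewrite -mulrA; exact: HK.
Qed.

Lemma colonE (T1 T2 : eqType) (x : T1 -> R) (F : T2 -> R -> Prop) s1 s2 K r :
  is_id K -> uniq s2 ->
  (colon K (iprodl ([seq principal (x i) | i <- s1] ++ [seq F j | j <- s2])) r <->
   forall g : T2 -> R, (forall j, j \in s2 -> F j (g j)) ->
     K (r * ((\prod_(i <- s1) x i) * \prod_(j <- s2) g j))).
Proof.
move=> idK us2.
have idK' := id_mul r idK.
rewrite /colon -/(subI _ _) (sub_Gen _ idK') Gen_cat Gen_principal.
  exact: Gen_idx.
move=> c w; apply: Gen_mono => z /= H.
case: idK => _ _ KM.
have -> : r * (c * w * z) = c * (r * (w * z)) by ring.
exact: KM.
Qed.

Lemma memE k (P : 'I_k -> Prop) : (forall j, j \in enum 'I_k -> P j) <-> forall j, P j.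
Proof. by split=> H j; [apply: H; rewrite mem_enum | move=> _; apply: H]. Qed.

Lemma memFE k (P : 'I_k -> Prop) j0 :
  (forall j, j \in [seq j <- enum 'I_k | j != j0] -> P j) <-> forall j, j != j0 -> P j.
Proof.
split=> H j; [move=> Hj; apply: H; rewrite mem_filter Hj mem_enum //
  | rewrite mem_filter => /andP[Hj _]; exact: H].
Qed.

Lemma colP m t (x : 'I_m -> R) (F : 'I_t -> R -> Prop) K r : is_id K ->
  (colon K (mixprod x F) r <-> forall g, (forall j, F j (g j)) -> K (r * (Pall x * Pall g))).
Proof.
move=> idK; rewrite /mixprod (@colonE _ _ _ _ _ _ _ _ idK (enum_uniq _)).
by split=> H g Hg; apply: H; [exact: (memE (fun j => F j (g j))).2 Hg | exact: (memE (fun j => F j (g j))).1 Hg].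
Qed.

Lemma colX m t (x : 'I_m -> R) (F : 'I_t -> R -> Prop) K r i0 : is_id K ->
  (colon K (mixprod_omx x F i0) r <->
   forall g, (forall j, F j (g j)) -> K (r * (Pom x i0 * Pall g))).
Proof.
move=> idK; rewrite /mixprod_omx (@colonE _ _ _ _ _ _ _ _ idK (enum_uniq _)).
by split=> H g Hg; apply: H; [exact: (memE (fun j => F j (g j))).2 Hg | exact: (memE (fun j => F j (g j))).1 Hg].
Qed.

Lemma colF m t (x : 'I_m -> R) (F : 'I_t -> R -> Prop) K r j0 : is_id K ->
  (colon K (mixprod_omI x F j0) r <->
   forall g, (forall j, j != j0 -> F j (g j)) -> K (r * (Pall x * Pom g j0))).
Proof.
move=> idK; rewrite /mixprod_omI (@colonE _ _ _ _ _ _ _ _ idK (filter_uniq _ (enum_uniq _))).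
by split=> H g Hg; apply: H; [exact: (memFE (fun j => F j (g j)) _).2 Hg | exact: (memFE (fun j => F j (g j)) _).1 Hg].
Qed.

Lemma zero_id : is_id (@zeroI R).
Proof. split; rewrite /zeroI; [by [] | by move=> x y -> ->; rewrite addr0 | by move=> r x ->; rewrite mulr0]. Qed.

Lemma idl_is_id (T : Type) (K : R -> Prop) (P : T -> Prop) (c : T -> R) :
  is_id K -> is_id (fun a => forall g, P g -> K (a * c g)).
Proof.
case=> K0 KD KM; split.
- by move=> g _; rewrite mul0r.
- by move=> x y Hx Hy g Pg; rewrite mulrDl; apply: KD; [apply: Hx | apply: Hy].
- by move=> r x Hx g Pg; rewrite -mulrA; apply: KM; apply: Hx.
Qed.

Lemma colon_id (K L : R -> Prop) : is_id K -> is_id (colon K L).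
Proof. exact: (@idl_is_id R K L id). Qed.

Lemma u4 (hu : u_ring R) (H A D : R -> Prop) m t (B : 'I_m -> R -> Prop)
  (C : 'I_t -> R -> Prop) :
  is_id H -> is_id A -> is_id D -> (forall i, is_id (B i)) -> (forall j, is_id (C j)) ->
  (forall a, H a -> [\/ A a, (exists i, B i a), (exists j, C j a) | D a]) ->
  [\/ subI H A, (exists i, subI H (B i)), (exists j, subI H (C j)) | subI H D].
Proof.
move=> iH iA iD iB iC cov.
pose J (k : 'I_(m + t + 2)) : R -> Prop :=
  match split k with
  | inl k1 => match split k1 with inl i => B i | inr j => C j end
  | inr k2 => if k2 == ord0 then A else D end.
have iJ : forall k, is_id (J k).
  move=> k; rewrite /J; case: (split k) => [k1|k2]; first by case: (split k1).
  by case: eqP.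
have [] := hu H _ J iH iJ.
  move=> a Ha; case: (cov a Ha) => [Aa|[i Bi]|[j Cj]|Da].
  - by exists (unsplit (inr ord0)); rewrite /J unsplitK eqxx.
  - by exists (unsplit (inl (unsplit (inl i)))); rewrite /J !unsplitK.
  - by exists (unsplit (inl (unsplit (inr j)))); rewrite /J !unsplitK.
  - exists (unsplit (inr (lift ord0 ord0))); rewrite /J unsplitK.
    by case: eqP => // /eqP; rewrite eq_sym (negbTE (neq_lift _ _)).
move=> k; rewrite /J; case: (split k) => [k1|k2].
  case: (split k1) => [i|j] HS; [apply: Or42 | apply: Or43]; by eexists; exact: HS.
by case: eqP => _ HS; [apply: Or41 | apply: Or44].
Qed.

Definition cfn k (a : R) (f : 'I_k -> R) : 'I_k.+1 -> R :=
  fun i => if unlift ord0 i is Some j then f j else a.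

Lemma cfn0 k a (f : 'I_k -> R) : cfn a f ord0 = a.
Proof. by rewrite /cfn unlift_none. Qed.

Lemma cfnS k a (f : 'I_k -> R) i : cfn a f (lift ord0 i) = f i.
Proof. by rewrite /cfn liftK. Qed.

Lemma Pall_cfn k a (f : 'I_k -> R) : Pall (cfn a f) = a * Pall f.
Proof. by rewrite L_all cfn0 /Pall; congr (_ * _); apply: eq_bigr => i _; rewrite cfnS. Qed.

Lemma Pom_cfn0 k a (f : 'I_k -> R) : Pom (cfn a f) ord0 = Pall f.
Proof. by rewrite L_om0 /Pall; apply: eq_bigr => i _; rewrite cfnS. Qed.

Lemma Pom_cfnS k a (f : 'I_k -> R) i : Pom (cfn a f) (lift ord0 i) = a * Pom f i.
Proof. by rewrite L_omS cfn0 /Pom; congr (_ * _); apply: eq_bigr => j _; rewrite cfnS. Qed.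

Lemma Pall0 (g : 'I_0 -> R) : Pall g = 1.
Proof. by rewrite Pall_ord big_ord0. Qed.

Ltac rearr H :=
  first [ match type of H with ?e1 = 0 => match goal with |- ?e2 = 0 =>
            have <- : e1 = e2 by ring end end; exact H
        | match type of H with ?P ?e1 => match goal with |- ?P ?e2 =>
            have <- : e1 = e2 by ring end end; exact H ].

Lemma memS t (F : 'I_t.+1 -> R -> Prop) (g : 'I_t.+1 -> R) :
  F ord0 (g ord0) -> (forall j, F (lift ord0 j) (g (lift ord0 j))) -> forall j, F j (g j).
Proof. by move=> H0 HS j; case: (unliftP ord0 j) => [j' ->|->]. Qed.

Lemma core n (I : R -> Prop) (hu : u_ring R) (iI : is_id I)
  (hw : weakly_n_absorbing n I) :
  forall t m, (m + t = n)%N -> forall (x : 'I_m -> R) (F : 'I_t -> R -> Prop),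
  (forall j, is_id (F j)) ->
  ~ (forall g, (forall j, F j (g j)) -> I (Pall x * Pall g)) ->
  forall r, (forall g, (forall j, F j (g j)) -> I (r * (Pall x * Pall g))) ->
  [\/ exists i0, forall g, (forall j, F j (g j)) -> I (r * (Pom x i0 * Pall g)),
      exists j0, forall g, (forall j, j != j0 -> F j (g j)) -> I (r * (Pall x * Pom g j0))
    | forall g, (forall j, F j (g j)) -> r * (Pall x * Pall g) = 0].
Proof.
elim=> [|t IH] m Emn x F iF Hyp r Hr.
- rewrite addn0 in Emn; subst n.
  have Fv : forall (g : 'I_0 -> R) j, F j (g j) by move=> g [].
  have HrX : I (r * Pall x) by have := Hr (fun _ => 0) (Fv _); rewrite Pall0 mulr1.
  have nX : ~ I (Pall x) by move=> HX; apply: Hyp => g _; rewrite Pall0 mulr1.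
  case: (eqVneq (r * Pall x) 0) => [rx0|rxn0].
    by apply: Or33 => g _; rewrite Pall0 mulr1.
  have Pa : \prod_(i < m.+1) cfn r x i = r * Pall x by rewrite -Pall_ord Pall_cfn.
  have h1 : \prod_(i < m.+1) cfn r x i != 0 by rewrite Pa.
  have h2 : I (\prod_(i < m.+1) cfn r x i) by rewrite Pa.
  case: hw => _ hw; have [j] := hw _ h1 h2.
  rewrite -Pom_ord; case: (unliftP ord0 j) => [i0 ->|->].
    by rewrite Pom_cfnS => Hj; apply: Or31; exists i0 => g _; rewrite Pall0 mulr1.
  by rewrite Pom_cfn0.
- pose F' j := F (lift ord0 j).
  have iF' : forall j, is_id (F' j) by move=> j; apply: iF.
  case: (classic (forall g', (forall j, F' j (g' j)) -> I (r * (Pall x * Pall g'))))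
    => [PE|nPE].
    apply: Or32; exists ord0 => g Hg; rewrite L_om0; apply: PE => j; apply: Hg.
    by rewrite eq_sym neq_lift.
  pose A0 := fun a => forall g', (forall j, F' j (g' j)) -> I (a * (Pall x * Pall g')).
  pose B := fun (i : 'I_m) a => forall g', (forall j, F' j (g' j)) ->
                                  I (a * (r * (Pom x i * Pall g'))).
  pose C := fun (j : 'I_t) a => forall g', (forall j', j' != j -> F' j' (g' j')) ->
                                  I (a * (r * (Pall x * Pom g' j))).
  pose D := fun a => forall g', (forall j, F' j (g' j)) ->
                                  zeroI (a * (r * (Pall x * Pall g'))).
  have cov : forall a, F ord0 a -> [\/ A0 a, (exists i, B i a), (exists j, C j a) | D a].
    move=> a Fa; case: (classic (A0 a)) => [?|nA]; first by apply: Or41.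
    have Emn' : (m.+1 + t = n)%N by rewrite addSnnS.
    have Hyp' : ~ (forall g', (forall j, F' j (g' j)) -> I (Pall (cfn a x) * Pall g')).
      move=> H; apply: nA => g' Hg'; have := H g' Hg'; rewrite Pall_cfn => H1; rearr H1.
    have Hr' : forall g', (forall j, F' j (g' j)) -> I (r * (Pall (cfn a x) * Pall g')).
      move=> g' Hg'; have := Hr (cfn a g').
      rewrite !Pall_cfn => H1; have {}H1 := H1 (memS (F := F) (g := cfn a g') _ _).
      rewrite cfn0 in H1; have {}H1 := H1 Fa.
      have {}H1 : I (r * (Pall x * (a * Pall g'))).
        by apply: H1 => j; rewrite cfnS; apply: Hg'.
      rearr H1.
    case: (IH _ Emn' _ _ iF' Hyp' r Hr') => [[i' Hi]|[j Hj]|H0].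
    + move: Hi; case: (unliftP ord0 i') => [i ->|->].
        rewrite Pom_cfnS => Hi; apply: Or42; exists i => g' Hg'.
        have H1 := Hi g' Hg'; rearr H1.
      by rewrite Pom_cfn0.
    + apply: Or43; exists j => g' Hg'; have := Hj g' Hg'; rewrite Pall_cfn => H1; rearr H1.
    + apply: Or44 => g' Hg'; have := H0 g' Hg'; rewrite Pall_cfn => H1; rewrite /zeroI.
      rearr H1.
  have [HA|[i HB]|[j HC]|HD] := u4 hu (iF ord0) (idl_is_id _ _ iI)
     (idl_is_id _ _ zero_id) (fun i => idl_is_id _ _ iI) (fun j => idl_is_id _ _ iI) cov.
  + case: Hyp => g Hg; rewrite L_all.
    have H1 := HA (g ord0) (Hg ord0) (fun j => g (lift ord0 j)) (fun j => Hg _); rearr H1.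
  + apply: Or31; exists i => g Hg; rewrite L_all.
    have H1 := HB (g ord0) (Hg ord0) (fun j => g (lift ord0 j)) (fun j => Hg _); rearr H1.
  + apply: Or32; exists (lift ord0 j) => g Hg; rewrite L_omS.
    have H1 := HC (g ord0) (Hg ord0 (neq_lift _ _)) (fun j => g (lift ord0 j)).
    have {}H1 : I (g ord0 * (r * (Pall x * Pom (fun j0 : 'I_t => g (lift ord0 j0)) j))).
      apply: H1 => j' Hj'; apply: Hg; by rewrite (inj_eq (@lift_inj _ ord0)).
    rearr H1.
  + apply: Or33 => g Hg; rewrite L_all.
    have H1 := HD (g ord0) (Hg ord0) (fun j => g (lift ord0 j)) (fun j => Hg _).
    rewrite /zeroI in H1; rearr H1.
Qed.

Lemma iprod_id (A B : R -> Prop) : is_id (iprod A B).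
Proof.
split.
- by move=> K [K0 _ _] _.
- by move=> x y Hx Hy K iK HK; case: (iK) => _ KD _; apply: KD; [apply: Hx | apply: Hy].
- by move=> r x Hx K iK HK; case: (iK) => _ _ KM; apply: KM; apply: Hx.
Qed.

Lemma principal_id (x : R) : is_id (principal x).
Proof.
split.
- by exists 0; rewrite mul0r.
- by move=> a b [c ->] [d ->]; exists (c + d); rewrite mulrDl.
- by move=> r a [c ->]; exists (r * c); rewrite mulrA.
Qed.

Lemma prod_in (T : Type) (x : T -> R) s :
  iprodl [seq principal (x i) | i <- s] (\prod_(i <- s) x i).
Proof.
elim: s => [|i0 s IH] /=; first by [].
by rewrite big_cons => K _ HK; apply: HK => //; exists 1; rewrite mul1r.
Qed.

Lemma a_b n (I : R -> Prop) : strongly_weakly_n_absorbing n I -> weakly_n_absorbing n I.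
Proof.
case=> pI Ha; split => // a an0 aI.
have iI := pI.1.
have Hs : subI (iprodl [seq principal (a i) | i <- enum 'I_n.+1]) I.
  have Hp : forall r w, principal (Pall a) w -> principal (Pall a) (r * w).
    by move=> r w; case: (principal_id (Pall a)) => _ _; apply.
  move=> z Hz.
  have : principal (Pall a) z.
    by move: z Hz; apply/(sub_Gen _ (principal_id _)); apply/(Gen_principal _ _ Hp);
       exists 1; rewrite mul1r.
  case=> c ->; case: iI => _ _; apply; by rewrite Pall_ord.
have nz : exists z, iprodl [seq principal (a i) | i <- enum 'I_n.+1] z /\ z <> 0.
  by exists (Pall a); split; [exact: prod_in | rewrite Pall_ord; apply/eqP].
have [j Hj] := Ha (fun i => principal (a i)) (fun i => principal_id _) nz Hs.
exists j; rewrite -Pom_ord; apply: Hj; exact: prod_in.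
Qed.

Lemma Pall_split k (f : 'I_k -> R) i0 : Pall f = f i0 * Pom f i0.
Proof. by rewrite /Pall (bigD1_seq i0) ?mem_enum ?enum_uniq // /Pom big_filter. Qed.

Lemma b_c n (I : R -> Prop) (hu : u_ring R) :
  weakly_n_absorbing n I -> condC n I.
Proof.
move=> hw; have iI := hw.1.1.
move=> t tn F x iF nsub r.
have Hyp : ~ (forall g, (forall j, F j (g j)) -> I (Pall x * Pall g)).
  move=> H; apply: nsub => z Pz.
  have := (colP x F 1 iI).2 (fun g Hg => eq_ind _ I (H g Hg) _ (esym (mul1r _))) z Pz.
  by rewrite mul1r.
have Emn : (n - t + t = n)%N by rewrite subnK.
rewrite (colP _ _ _ iI); split.
- move=> Hr; case: (core hu iI hw Emn iF Hyp Hr) => [[i0 H]|[j0 H]|H].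
  + by apply: Or31; exists i0; apply/(colX _ _ _ _ iI).
  + by apply: Or32; exists j0; apply/(colF _ _ _ _ iI).
  + by apply: Or33; apply/(colP _ _ _ zero_id).
- case: iI => I0 _ IM.
  case=> [[i0 /(colX _ _ _ _ hw.1.1) H]|[j0 /(colF _ _ _ _ hw.1.1) H]|/(colP _ _ _ zero_id) H]
    g Hg.
  + rewrite (Pall_split x i0); have H1 := IM (x i0) _ (H g Hg); rearr H1.
  + rewrite (Pall_split g j0); have H1 := IM (g j0) _ (H g (fun j _ => Hg j)); rearr H1.
  + by have := H g Hg; rewrite /zeroI => ->.
Qed.

Lemma c_d n (I : R -> Prop) (hu : u_ring R) : proper_id I -> condC n I -> condD n I.
Proof.
move=> pI Hc t tn F x iF nsub; have iI := pI.1.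
have Hc' := Hc t tn F x iF nsub.
have [HA|[i HB]|[j HC]|HD] := u4 hu (colon_id _ iI) (colon_id (mixprod x F) zero_id)
   (colon_id (mixprod x F) zero_id) (fun i => colon_id (mixprod_omx x F i) iI)
   (fun j => colon_id (mixprod_omI x F j) iI)
   (fun a Ha => match (Hc' a).1 Ha with
                | Or31 h => Or42 _ _ _ h | Or32 h => Or43 _ _ _ h | Or33 h => Or44 _ _ _ h end).
- by apply: Or33 => r; split; [apply: HA | move=> h; apply/(Hc' r).2; apply: Or33].
- by apply: Or31; exists i => r; split; [apply: HB | move=> h; apply/(Hc' r).2; apply: Or31; exists i].
- by apply: Or32; exists j => r; split; [apply: HC | move=> h; apply/(Hc' r).2; apply: Or32; exists j].
- by apply: Or33 => r; split; [apply: HD | move=> h; apply/(Hc' r).2; apply: Or33].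
Qed.

Lemma d_a n (I : R -> Prop) : proper_id I -> condD n I -> strongly_weakly_n_absorbing n I.
Proof.
move=> pI Hd; have iI := pI.1; split => // F iF [z [Pz zn0]] Hsub.
pose F' (j : 'I_n) := F (lift ord0 j).
pose x (i : 'I_(n - n)) := (0 : R).
have e0 : enum 'I_(n - n) = [::] by apply/size0nil; rewrite size_enum_ord subnn.
have EF : [seq F i | i <- enum 'I_n.+1] = F ord0 :: [seq F' j | j <- enum 'I_n].
  by rewrite enum_ordSl /= -map_comp.
have E0 : [seq F i | i <- enum 'I_n.+1 & i != ord0] = [seq F' j | j <- enum 'I_n].
  by rewrite enum_ordSl /= filter_map -map_comp; congr map; apply/all_filterP/allP.
have ES : forall j, [seq F i | i <- enum 'I_n.+1 & i != lift ord0 j] =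
                    F ord0 :: [seq F' j' | j' <- enum 'I_n & j' != j].
  by move=> j; rewrite enum_ordSl /= filter_map -map_comp; congr (_ :: map _ _).
have EP : mixprod x F' = iprodl [seq F' j | j <- enum 'I_n] by rewrite /mixprod e0.
have EPj : forall j, mixprod_omI x F' j = iprodl [seq F' j' | j' <- enum 'I_n & j' != j].
  by move=> j; rewrite /mixprod_omI e0.
rewrite EF /= in Pz Hsub.
have Hcol : forall a, F ord0 a -> colon I (mixprod x F') a.
  by move=> a Fa w; rewrite EP => Pw; apply: Hsub => K _ HK; apply: HK.
case: (classic (subI (mixprod x F') I)) => [HP|nsub].
  by exists ord0; rewrite E0 -EP.
case: (Hd n (leqnn n) F' x (fun j => iF _) nsub) => [[i _]|[j Hj]|H0].
- by have := ltn_ord i; rewrite [X in (_ < X)%N]subnn.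
- exists (lift ord0 j); rewrite ES /= => w Hw; apply: Hw => // a b Fa Pb.
  by apply: ((Hj a).1 (Hcol a Fa)); rewrite EPj.
- case: zn0; apply: (Pz (@zeroI R) zero_id) => a b Fa Pb.
  by apply: ((H0 a).1 (Hcol a Fa)); rewrite EP.
Qed.
End S.

Theorem mainTheorem2 (R : comNzRingType) (n : nat) (I : R -> Prop) :
  u_ring R -> (0 < n)%N -> proper_id I ->
  [<-> strongly_weakly_n_absorbing n I;
       weakly_n_absorbing n I;
       condC n I;
       condD n I].
Proof.
move=> hu _ pI; tfae.
- exact: a_b.
- exact: b_c.
- exact: c_d.
- exact: d_a.
Qed.
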